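(* Let $k>4$ be an odd integer. Assume that when the procedure $\mathrm{Permutations}$ is run on a list of $k$ pairwise distinct elements $(x_0,x_1,\dots,x_{k-1})$ (i.e. $\mathrm{Permutations}(L,0,\mathrm{Func})$ with $L=(x_0,\dots,x_{k-1})$), the last permutation it produces is $(x_1,x_0,x_2,x_3,\dots,x_{k-1})$. Then, when $\mathrm{Permutations}$ is run on the list $(0,1,2,\dots,k)$ of $k+1$ elements, each of the $k+1$ elements is inserted exactly once at the beginning of the list (i.e. the $k+1$ recursive calls $\mathrm{Permutations}(L,1,\mathrm{Func})$ made by the top-level invocation are made with pairwise distinct elements at position $0$), and the last permutation produced is $(1,4,3,5,6,7,8,\dots,k,2,0)$.
   Context: Lists are 0-indexed. For a list $L$, $\mathrm{extract}(L,j)$ removes the element at position $j$ from $L$ and returns it; $\mathrm{Insert}(L,i,x)$ inserts $x$ into $L$ so that it occupies position $i$, shifting the elements previously at positions $\ge i$ one step to the right. Each combined operation $\mathrm{Insert}(L,i,\mathrm{extract}(L,j))$ first extracts, then inserts, so the length of $L$ is unchanged. The recursive procedure $\mathrm{Permutations}(L,i,\mathrm{Func})$ (with $\mathrm{Func}$ a callback) is: let $n=\mathrm{length}(L)$. If $i\ge n-1$, call $\mathrm{Func}(L)$. Otherwise: (1) call $\mathrm{Permutations}(L,i+1,\mathrm{Func})$; (2) do $\mathrm{Insert}(L,i,\mathrm{extract}(L,i+1))$ and call $\mathrm{Permutations}(L,i+1,\mathrm{Func})$; (3) repeat $\max(n-i-3,0)$ times: if $n-i$ is even, do $\mathrm{Insert}(L,i,\mathrm{extract}(L,n-1))$,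 otherwise do $\mathrm{Insert}(L,i,\mathrm{extract}(L,i+1))$; then call $\mathrm{Permutations}(L,i+1,\mathrm{Func})$; (4) if $n-i>2$: do $\mathrm{Insert}(L,i,\mathrm{extract}(L,i+1))$ and call $\mathrm{Permutations}(L,i+1,\mathrm{Func})$. The main call is $\mathrm{Permutations}(L,0,\mathrm{Func})$; each list passed to $\mathrm{Func}$ is a ''produced permutation''. A call $\mathrm{Permutations}(L,i,\mathrm{Func})$ modifies only positions $\ge i$, and its effect on that suffix depends only on the suffix length $n-i$. The ''last permutation produced'' when run on a list is the state of the list when the main call returns (which equals the argument of the last call to $\mathrm{Func}$). *)

(* Defs.v *)
From mathcomp Require Import all_boot.
Set Implicit Arguments. Unset Strict Implicit. Unset Printing Implicit Defensive.

Section Perm.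
Variable T : Type.

Definition extract_rest (L : seq T) (j : nat) : seq T := take j L ++ drop j.+1 L.

(* Insert(L, i, extract(L, j)); leaves L unchanged if j is out of range
   (never happens in the procedure) *)
Definition move (L : seq T) (i j : nat) : seq T :=
  match drop j L with
  | [::] => L
  | x :: _ => let L' := extract_rest L j in take i L' ++ x :: drop i L'
  end.

(* One invocation of Permutations(L, i, Func) with i < n - 1, given the
   recursive procedure [rec] standing for Permutations(_, i+1, Func).
   Returns (final list, produced permutations in order,
            list of the arguments passed to the recursive calls, in order). *)
Definition perm_level (rec : seq T -> seq T * seq (seq T)) (L : seq T) (i : nat)
  : seq T * seq (seq T) * seq (seq T) :=
  let n := size L in
  let call (st : seq T * seq (seq T) * seq (seq T)) (L0 : seq T) :=
      let '(_, P, C) := st in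
      let '(L1, P1) := rec L0 in (L1, P ++ P1, rcons C L0) in
  let st1 := call (L, [::], [::]) L in
  let st2 := call st1 (move st1.1.1 i i.+1) in
  let j := if ~~ odd (n - i) then n.-1 else i.+1 in
  let st3 := iter (n - i - 3) (fun st => call st (move st.1.1 i j)) st2 in
  if 2 < n - i then call st3 (move st3.1.1 i i.+1) else st3.

Fixpoint perm_rec (fuel : nat) (L : seq T) (i : nat) : seq T * seq (seq T) :=
  if (size L).-1 <= i then (L, [:: L]) else
  match fuel with
  | 0 => (L, [::])
  | fuel'.+1 => let '(F, P, _) := perm_level (fun L' => perm_rec fuel' L' i.+1) L i
                in (F, P)
  end.

(* Main call Permutations(L, 0, Func) (fuel size L is sufficient). *)
Definition permutations (L : seq T) : seq T * seq (seq T) := perm_rec (size L) L 0.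

(* The last permutation produced = state of L when the main call returns. *)
Definition last_perm (L : seq T) : seq T := (permutations L).1.

(* The arguments of the recursive calls Permutations(L, 1, Func) made by the
   top-level invocation (assuming size L >= 2). *)
Definition top_calls (L : seq T) : seq (seq T) :=
  (perm_level (fun L' => perm_rec (size L).-1 L' 1) L 0).2.

End Perm.

(* Main.v *)
Require Import Defs.
From mathcomp Require Import all_boot zify.
Set Implicit Arguments. Unset Strict Implicit.

Section S.
Variable T : Type.
Implicit Types L : seq T.

Lemma move_cons (x : T) L i j : move (x :: L) i.+1 j.+1 = x :: move L i j.
Proof. rewrite /move /extract_rest /=. by case: (drop j L). Qed.

Definition callf (rec : seq T -> seq T * seq (seq T)) (st : seq T * seq (seq T) * seq (seq T)) L0 :=
  ((rec L0).1, st.1.2 ++ (rec L0).2, rcons st.2 L0).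

Lemma iter_ext A (f g : A -> A) n x : f =1 g -> iter n f x = iter n g x.
Proof. by move=> E; elim: n => //= n ->. Qed.

Lemma perm_level_eq rec L i : perm_level rec L i =
  let n := size L in
  let st1 := callf rec (L, [::], [::]) L in
  let st2 := callf rec st1 (move st1.1.1 i i.+1) in
  let j := if ~~ odd (n - i) then n.-1 else i.+1 in
  let st3 := iter (n - i - 3) (fun st => callf rec st (move st.1.1 i j)) st2 in
  if 2 < n - i then callf rec st3 (move st3.1.1 i i.+1) else st3.
Proof.
  have E : forall st L0, (let '(_, P, C) := st in let '(L1, P1) := rec L0 in (L1, P ++ P1, rcons C L0)) = callf rec st L0.
    by move=> [[? ?] ?] L0; rewrite /callf /=; case: (rec L0).
  rewrite /perm_level. cbv zeta. rewrite !E.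
  rewrite (@iter_ext _ _ (fun st => callf rec st (move st.1.1 i (if ~~ odd (size L - i) then (size L).-1 else i.+1)))); last by move=> st; rewrite E.
  have E1 : (let '(L1, P1) := rec L in (L1, [::] ++ P1, rcons [::] L)) = callf rec (L,[::],[::]) L.
    by rewrite /callf /=; case: (rec L).
  by rewrite !E1.
Qed.

Definition sh (x:T) (st : seq T * seq (seq T) * seq (seq T)) :=
  (x :: st.1.1, map (cons x) st.1.2, map (cons x) st.2).

Lemma callf_sh x rec rec' st L0 :
  (forall L, rec' (x::L) = (x :: (rec L).1, map (cons x) (rec L).2)) ->
  callf rec' (sh x st) (x::L0) = sh x (callf rec st L0).
Proof. by move=> H; rewrite /callf /sh H /= map_cat map_rcons. Qed.

Lemma level_sh x rec rec' L i :
  (forall L, rec' (x::L) = (x :: (rec L).1, map (cons x) (rec L).2)) ->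
  0 < size L -> perm_level rec' (x::L) i.+1 = sh x (perm_level rec L i).
Proof.
  move=> H Hs; rewrite !perm_level_eq.
  cbv zeta. rewrite [size (x :: L)]/= subSS.
  have E0 : (x :: L, [::], [::]) = sh x (L, [::], [::]) by [].
  rewrite E0 (callf_sh _ _ H).
  rewrite [(sh x _).1.1]/= move_cons (callf_sh _ _ H).
  set st2 := callf rec _ _.
  have -> : (if ~~ odd (size L - i) then size L else i.+2) =
            (if ~~ odd (size L - i) then (size L).-1 else i.+1).+1.
    by case: ifP => //; rewrite prednK.
  set j := (if ~~ odd (size L - i) then (size L).-1 else i.+1).
  have -> : forall n st, iter n (fun st => callf rec' st (move st.1.1 i.+1 j.+1)) (sh x st)
      = sh x (iter n (fun st => callf rec st (move st.1.1 i j)) st).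
    by move=> n st; elim: n => //= n ->; rewrite [(sh x _).1.1]/= move_cons (callf_sh _ _ H).
  case: ifP => // _.
  by rewrite [(sh x _).1.1]/= move_cons (callf_sh _ _ H).
Qed.

Lemma rec_sh x f : forall L i, perm_rec f (x::L) i.+1 =
   (x :: (perm_rec f L i).1, map (cons x) (perm_rec f L i).2).
Proof.
  elim: f => [|f IH] L i /=;
  (have cond: ((size L) <= i.+1) = ((size L).-1 <= i) by case: L => //= *; lia);
  rewrite cond; case: ifP => // Hc.
  rewrite (@level_sh x (fun L => perm_rec f L i.+1) (fun L => perm_rec f L i.+2) L i (fun L => IH L i.+1)); last by move/negbT: Hc; lia.
  by case: perm_level => [[F P] C].
Qed.
End S.
Lemma iota_rcons m n : iota m n.+1 = rcons (iota m n) (m + n).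
Proof. by rewrite -addn1 iotaD cats1. Qed.

Lemma move_last (T : Type) (s : seq T) y j : j = size s -> move (rcons s y) 0 j = y :: s.
Proof.
  move=> ->; rewrite /move /extract_rest take0 drop0 /=.
  rewrite -cats1 drop_size_cat // take_size_cat // drop_oversize ?size_cat ?addn1 //.
  by rewrite cats0.
Qed.

Lemma uniq_swap (a b c : nat) rest : uniq [:: a, b, c & rest] -> uniq [:: a, c, b & rest].
Proof.
  move=> U; rewrite (perm_uniq (s2 := [:: a, b, c & rest])) //.
  by rewrite perm_cons (perm_catCA [:: c] [:: b] rest).
Qed.

Theorem lemma1 (k : nat) :
  4 < k -> odd k ->
  (forall L : seq nat, size L = k -> uniq L ->
     last_perm L = [:: nth 0 L 1, nth 0 L 0 & drop 2 L]) ->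
  size (top_calls (iota 0 k.+1)) = k.+1 /\
  uniq [seq head 0 c | c <- top_calls (iota 0 k.+1)] /\
  last_perm (iota 0 k.+1) = [:: 1; 4; 3] ++ iota 5 (k - 4) ++ [:: 2; 0].
Proof.
  move=> k4 ko Hyp.
  set rec := fun L' : seq nat => perm_rec k L' 1.
  have R_eq : forall a b c rest, size rest = k - 2 -> uniq [:: a, b, c & rest] ->
      (rec [:: a, b, c & rest]).1 = [:: a, c, b & rest].
    move=> a b c rest Hs U.
    rewrite /rec (rec_sh a k [:: b, c & rest] 0).
    have Hs' : size [:: b, c & rest] = k by rewrite /= Hs; lia.
    move: U => /= /andP [_ U].
    move: (Hyp _ Hs' U); rewrite /last_perm /Defs.permutations Hs' => E. by rewrite E /= drop0.
  have top : top_calls (iota 0 k.+1) = (perm_level rec (iota 0 k.+1) 0).2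
    by rewrite /top_calls size_iota.
  have lst : last_perm (iota 0 k.+1) = (perm_level rec (iota 0 k.+1) 0).1.1.
    rewrite /last_perm /Defs.permutations size_iota /= size_iota.
    case: ifP => [|_]; first lia.
    by case: perm_level => [[]].
  have Li : iota 0 k.+1 = [:: 0, 1, 2 & iota 3 (k - 2)].
    by rewrite (_ : k.+1 = 3 + (k - 2)) ?iotaD //; lia.
  rewrite top lst Li perm_level_eq; cbv zeta.
  have sz : size [:: 0, 1, 2 & iota 3 (k - 2)] = k.+1 by rewrite /= size_iota; lia.
  rewrite sz subn0 (_ : ~~ odd k.+1 = true) /=; last by rewrite ko.
  rewrite ifT; last lia.
  have C1 : forall st L0, (callf rec st L0).1.1 = (rec L0).1 by [].
  have C2 : forall st L0, (callf rec st L0).2 = rcons st.2 L0 by [].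
  set st1 := callf rec ([:: 0, 1, 2 & iota 3 (k - 2)], [::], [::]) _.
  have st1_1 : st1.1.1 = [:: 0, 2, 1 & iota 3 (k - 2)].
    rewrite /st1 C1 R_eq ?size_iota // -Li; exact: iota_uniq.
  have st1_2 : st1.2 = [:: [:: 0, 1, 2 & iota 3 (k - 2)]] by [].
  set st2 := callf rec st1 (move st1.1.1 0 1).
  have U3 : uniq [:: 2, 0, 1 & iota 3 (k - 2)].
    rewrite /= !inE !mem_iota iota_uniq; lia.
  have st2_1 : st2.1.1 = [:: 2, 1, 0 & iota 3 (k - 2)].
    by rewrite /st2 C1 st1_1 /= R_eq ?size_iota.
  have st2_2 : map (head 0) st2.2 = [:: 0; 2].
    by rewrite /st2 C2 st1_2 st1_1.
  set g := fun st : seq nat * seq (seq nat) * seq (seq nat) => callf rec st (move st.1.1 0 k).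
  pose F u := (k - u).+1 :: 1 :: iota (k + 2 - u) (u - 1) ++ [:: 2; 0] ++ iota 3 (k - 2 - u).
  have claim : forall u, u < k - 2 -> (iter u.+1 g st2).1.1 = F u.+1 /\ uniq (F u.+1) /\
      map (head 0) (iter u.+1 g st2).2 = [:: 0; 2] ++ map (fun s => k - s) (iota 0 u.+1).
    elim=> [|u IH] Hu.
      have A0 : move st2.1.1 0 k = [:: k, 2, 1, 0 & iota 3 (k - 3)].
        rewrite st2_1 (_ : k - 2 = (k - 3).+1) ?iota_rcons; last lia.
        rewrite (_ : 3 + (k - 3) = k); last lia.
        apply: (move_last (s := [:: 2, 1, 0 & iota 3 (k - 3)])); rewrite /= size_iota; lia.
      have U4 : uniq [:: k, 2, 1, 0 & iota 3 (k - 3)].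
        rewrite /= !inE !mem_iota iota_uniq; lia.
      have F1 : F 1 = [:: k, 1, 2, 0 & iota 3 (k - 3)].
        rewrite /F subnn /=; congr (_ :: _ :: _ :: _ :: iota _ _); lia.
      rewrite F1 [iter 1 g st2]/= /g C1 C2 A0 R_eq ?size_iota //; last first.
        by rewrite /= size_iota; lia.
      split => //; split; first exact: uniq_swap.
      by rewrite map_rcons st2_2 /= subn0.
    have [E1 [U1 H1]] := IH (ltnW Hu).
    have Fr : F u.+1 = rcons [:: (k - u.+1).+1, 1 & iota (k + 2 - u.+1) (u.+1 - 1) ++ [:: 2; 0] ++ iota 3 (k - 3 - u.+1)] (3 + (k - 3 - u.+1)).
      rewrite /F (_ : k - 2 - u.+1 = (k - 3 - u.+1).+1) ?iota_rcons; last lia.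
      by rewrite -!rcons_cat.
    have Ur : uniq [:: 3 + (k - 3 - u.+1), (k - u.+1).+1, 1 & iota (k + 2 - u.+1) (u.+1 - 1) ++ [:: 2; 0] ++ iota 3 (k - 3 - u.+1)].
      by move: U1; rewrite Fr rcons_uniq.
    rewrite iterS /g C1 C2 E1 Fr move_last; last first. rewrite /= !size_cat !size_iota /= size_iota; lia.
    rewrite R_eq //; last by rewrite /= !size_cat !size_iota /= ?size_iota; lia.
    have Fs : [:: 3 + (k - 3 - u.+1), 1, (k - u.+1).+1 & iota (k + 2 - u.+1) (u.+1 - 1) ++ [:: 2; 0] ++ iota 3 (k - 3 - u.+1)] = F u.+2.
      rewrite /F (_ : u.+2 - 1 = (u.+1 - 1).+1); last lia.
      rewrite [iota (k + 2 - u.+2) _]/=.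
      congr [:: _, _, _ & iota _ _ ++ _ ++ iota _ _]; lia.
    rewrite Fs; split => //; split; first by rewrite -Fs; exact: uniq_swap.
    rewrite map_rcons H1 (iota_rcons 0 u.+1) map_rcons -rcons_cat /=.
    rewrite (_ : 3 + (k - 3 - u.+1) = k - (0 + u.+1)) //; lia.
  rewrite (_ : k.+1 - 3 = (k - 3).+1); last lia.
  have Hk3 : k - 3 < k - 2 by lia.
  have [E1 [U1 H1]] := claim _ Hk3.
  have Fk : F (k - 3).+1 = [:: 3, 1, 4 & iota 5 (k - 4) ++ [:: 2; 0]].
    rewrite /F (_ : k - (k - 3).+1 = 2); last lia.
    rewrite (_ : k + 2 - (k - 3).+1 = 4); last lia.
    rewrite (_ : (k - 3).+1 - 1 = (k - 4).+1); last lia.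
    rewrite (_ : k - 2 - (k - 3).+1 = 0); last lia.
    by [].
  have Um : uniq [:: 1, 3, 4 & iota 5 (k - 4) ++ [:: 2; 0]].
    move: U1; rewrite Fk => U1.
    rewrite (perm_uniq (s2 := [:: 3, 1, 4 & iota 5 (k - 4) ++ [:: 2; 0]])) //.
    by rewrite (perm_catCA [:: 1] [:: 3]).
  have Mv : move [:: 3, 1, 4 & iota 5 (k - 4) ++ [:: 2; 0]] 0 1 = [:: 1, 3, 4 & iota 5 (k - 4) ++ [:: 2; 0]] by [].
  rewrite C1 C2 E1 Fk Mv R_eq //; last by rewrite size_cat size_iota /=; lia.
  split; last split => //.
    rewrite size_rcons -(size_map (head 0)) H1 size_cat size_map size_iota /=; lia.
  rewrite map_rcons H1 rcons_uniq cat_uniq map_inj_in_uniq ?iota_uniq; last first.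
    move=> x y; rewrite !mem_iota => Hx Hy; lia.
  rewrite mem_cat negb_or andbT.
  apply/andP; split; first (apply/andP; split).
  - by [].
  - apply/negP => /mapP [x]; rewrite mem_iota /=; lia.
  - apply/andP; split => //; apply/hasPn => y /mapP [x]; rewrite mem_iota => Hx ->; rewrite !inE; lia.
Qed.
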